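(* Let $\ell$ be a positive integer and $n$ an integer such that $a:=n/\ell\in\mathbb Z$ and $n\ell+\ell^2>0$. Let $\xi_\ell=e^{2\pi i/\ell}$ and $I=\mathbb Z\cap[n,n+\ell-1]$. For parameters $(N,L)$ with $L\in\mathbb Z_{>0}$, $N\in\mathbb Z$, $A:=N/L\in\mathbb Z$, $NL+L^2>0$ (this will be used for $(N,L)=(n,\ell)$ and $(N,L)=(a,1)$), define for $n'\in\mathbb R$, $\ell'\in\mathbb Z$ $$\chi_{\mathsf A^{N,L}_{n',\ell'}}(u,v;\tau)=-i\,\frac{\theta_1(u;\tau)}{\eta(\tau)^3}\sum_{m\in\mathbb Z}\frac{(-1)^{k}e^{2\pi i v k}\,e^{2\pi i u(Ak+n'+\frac12)}\,e^{\pi i\tau k(k(2A+1)+2n'+1)}}{1-e^{2\pi i(u+k\tau)}},\qquad k=mL+\ell',$$ and for $n',e'\in\mathbb C$ $$\chi_{\mathsf T^{N,L}_{n',e'}}(u,v;\tau)=i(-1)^{\lfloor e'\rfloor}\frac{\theta_1(u;\tau)}{\eta(\tau)^3}\sum_{m\in\mathbb Z}(-1)^{mL}e^{2\pi i v(e'+mL)}e^{2\pi i u(n'+mN)}e^{2\pi i\tau\left(n'e'+\frac{e'^2}{2}+\frac{m^2}{2}(2NL+L^2)+m(Ne'+n'L+Le')\right)},$$ with $\lfloor e'\rfloor$ the largest integer $\le\operatorname{Re}e'$. Then for all $n'\in\mathbb R$ and $t\in\mathbb Z$, $$\chi_{\mathsf A^{n,\ell}_{n',t}}(u,v;\tau)=\frac1\ell\sum_{s\in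 I}\xi_\ell^{-ts}\chi_{\mathsf A^{a,1}_{n',0}}\Big(u,v+\frac s\ell;\tau\Big),\qquad \chi_{\mathsf A^{a,1}_{n',0}}\Big(u,v+\frac t\ell;\tau\Big)=\sum_{s\in I}\xi_\ell^{ts}\chi_{\mathsf A^{n,\ell}_{n',s}}(u,v;\tau),$$ and for all $n',e'\in\mathbb C$ and $s,t\in\mathbb Z$, $$\chi_{\mathsf T^{n,\ell}_{n'+tn/\ell,\,e'+t}}(u,v;\tau)=\frac1\ell\sum_{s\in I}\xi_\ell^{-st}e^{-2\pi i e's/\ell}\chi_{\mathsf T^{a,1}_{n',e'}}\Big(u,v+\frac s\ell;\tau\Big),$$ $$\chi_{\mathsf T^{a,1}_{n',e'}}\Big(u,v+\frac s\ell;\tau\Big)=e^{2\pi i e's/\ell}\sum_{t\in I}\xi_\ell^{st}\chi_{\mathsf T^{n,\ell}_{n'+tn/\ell,\,e'+t}}(u,v;\tau),$$ for all $u,v\in\mathbb C$, $\tau\in\mathbb H$ for which the atypical series are defined.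
   Context: $\theta_1(u;\tau)=-i\sum_{n\in\mathbb Z}(-1)^n e^{\pi i(n+\frac12)^2\tau+2\pi i u(n+\frac12)}$ and $\eta(\tau)=e^{\pi i\tau/12}\prod_{j\ge1}(1-e^{2\pi i j\tau})$. The functions $\chi_{\mathsf A}$, $\chi_{\mathsf T}$ are characters of atypical, respectively typical, modules of W-superalgebras extending $\widehat{\mathfrak{gl}}(1|1)$; $\mathsf A^{a,1}$, $\mathsf T^{a,1}$ are the case $(N,L)=(a,1)$. *)

(* Defs.v *)
From Stdlib Require Import Reals ZArith.
From Coquelicot Require Import Coquelicot.

Open Scope C_scope.

Definition Cexp (z : C) : C :=
  (exp (Re z) * cos (Im z), exp (Re z) * sin (Im z))%R.

Definition CZ (k : Z) : C := RtoC (IZR k).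
Definition twoPiI : C := (0, 2 * PI)%R.
Definition PiI : C := (0, PI)%R.

Definition sgnZ (k : Z) : C := if Z.even k then RtoC 1 else RtoC (-1).

Definition Clim (s : nat -> C) : C :=
  (real (Lim_seq (fun M => Re (s M))), real (Lim_seq (fun M => Im (s M)))).

(* Sum over Z: limit of the symmetric partial sums  sum_{m=-M}^{M} f m. *)
Definition sumZ (f : Z -> C) : C :=
  Clim (fun M => sum_n (fun j => f (Z.of_nat j - Z.of_nat M)%Z) (2 * M)).

Fixpoint prodC (f : nat -> C) (M : nat) : C :=
  match M with
  | O => RtoC 1
  | S M' => prodC f M' * f (S M')
  end.

Definition sumI (n l : Z) (f : Z -> C) : C :=
  sum_n (fun j => f (n + Z.of_nat j)%Z) (Z.to_nat (l - 1)).

Definition theta1 (u tau : C) : C :=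
  - Ci * sumZ (fun k =>
      let h := CZ k + RtoC (/2) in
      sgnZ k * Cexp (PiI * h * h * tau + twoPiI * u * h)).

Definition eta (tau : C) : C :=
  Cexp (PiI * tau / RtoC 12) *
  Clim (fun M => prodC (fun j => RtoC 1 - Cexp (twoPiI * RtoC (INR j) * tau)) M).

Definition floorRe (e : C) : Z := Int_part (Re e).

Definition chiA (N L : Z) (n' : R) (l' : Z) (u v tau : C) : C :=
  let A := (N / L)%Z in
  - Ci * theta1 u tau / (eta tau * eta tau * eta tau) *
  sumZ (fun m =>
    let k := (m * L + l')%Z in
    sgnZ k * Cexp (twoPiI * v * CZ k)
    * Cexp (twoPiI * u * (CZ (A * k) + RtoC n' + RtoC (/2)))
    * Cexp (PiI * tau * CZ k * (CZ k * CZ (2 * A + 1) + RtoC (2 * n') + RtoC 1))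
    / (RtoC 1 - Cexp (twoPiI * (u + CZ k * tau)))).

Definition chiT (N L : Z) (n' e' : C) (u v tau : C) : C :=
  Ci * sgnZ (floorRe e') * theta1 u tau / (eta tau * eta tau * eta tau) *
  sumZ (fun m =>
    sgnZ (m * L) * Cexp (twoPiI * v * (e' + CZ (m * L)))
    * Cexp (twoPiI * u * (n' + CZ (m * N)))
    * Cexp (twoPiI * tau *
        (n' * e' + e' * e' / RtoC 2
         + CZ (m * m) / RtoC 2 * CZ (2 * N * L + L * L)
         + CZ m * (CZ N * e' + n' * CZ L + CZ L * e')))).

Definition xi (l k : Z) : C := Cexp (twoPiI * CZ k / CZ l).

(* Main.v *)
Require Import Defs.
From Stdlib Require Import Reals ZArith Lra Lia Psatz FunctionalExtensionality.
From Coquelicot Require Import Coquelicot.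
Open Scope C_scope.

Lemma Cexp_add z w : Cexp (z + w) = Cexp z * Cexp w.
Proof.
  destruct z as [a b], w as [c d]. unfold Cexp. simpl.
  rewrite exp_plus, cos_plus, sin_plus.
  apply injective_projections; simpl; ring.
Qed.

Lemma Cmod_Cexp z : Cmod (Cexp z) = exp (Re z).
Proof.
  unfold Cexp, Cmod. cbn [fst snd].
  replace ((exp (Re z) * cos (Im z)) ^ 2 + (exp (Re z) * sin (Im z)) ^ 2)%R
    with ((exp (Re z))^2)%R.
  - rewrite sqrt_pow2; [reflexivity | left; apply exp_pos].
  - pose proof (sin2_cos2 (Im z)). unfold Rsqr in H. nra.
Qed.

Lemma Cexp_0 : Cexp 0 = 1.
Proof. unfold Cexp; simpl. rewrite exp_0, cos_0, sin_0.
  apply injective_projections; simpl; ring. Qed.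

Lemma Cexp_twoPiI : Cexp twoPiI = 1.
Proof. unfold Cexp, twoPiI; simpl. rewrite exp_0, cos_2PI, sin_2PI.
  apply injective_projections; simpl; ring. Qed.

Lemma Cexp_mtwoPiI : Cexp (- twoPiI) = 1.
Proof. unfold Cexp, twoPiI; simpl. rewrite Ropp_0, exp_0, cos_neg, sin_neg, cos_2PI, sin_2PI.
  apply injective_projections; simpl; ring. Qed.

Lemma CZ_add a b : CZ (a + b) = CZ a + CZ b.
Proof. unfold CZ. rewrite plus_IZR. apply injective_projections; simpl; ring. Qed.
Lemma CZ_mul a b : CZ (a * b) = CZ a * CZ b.
Proof. unfold CZ. rewrite mult_IZR. apply injective_projections; simpl; ring. Qed.
Lemma CZ_opp a : CZ (- a) = - CZ a.
Proof. unfold CZ. rewrite opp_IZR. apply injective_projections; simpl; ring. Qed.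
Lemma CZ_sub a b : CZ (a - b) = CZ a - CZ b.
Proof. unfold CZ. rewrite minus_IZR. apply injective_projections; simpl; ring. Qed.

Lemma Cexp_int m : Cexp (twoPiI * CZ m) = 1.
Proof.
  induction m using Z.peano_ind.
  - replace (twoPiI * CZ 0) with (RtoC 0). apply Cexp_0.
    unfold CZ, twoPiI; apply injective_projections; simpl; ring.
  - rewrite <- Z.add_1_r, CZ_add.
    replace (twoPiI * (CZ m + CZ 1)) with (twoPiI * CZ m + twoPiI)
      by (unfold CZ; simpl; apply injective_projections; simpl; ring).
    rewrite Cexp_add, IHm, Cexp_twoPiI. ring.
  - rewrite <- Z.sub_1_r, CZ_sub.
    replace (twoPiI * (CZ m - CZ 1)) with (twoPiI * CZ m + - twoPiI)
      by (unfold CZ; simpl; apply injective_projections; simpl; ring).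
    rewrite Cexp_add, IHm, Cexp_mtwoPiI. ring.
Qed.

Lemma sgnZ_add a b : sgnZ (a + b) = sgnZ a * sgnZ b.
Proof. unfold sgnZ. rewrite Z.even_add.
  destruct (Z.even a), (Z.even b); simpl; apply injective_projections; simpl; ring. Qed.

Lemma sgnZ_sq a : sgnZ a * sgnZ a = 1.
Proof. unfold sgnZ. destruct (Z.even a); apply injective_projections; simpl; ring. Qed.

Lemma Cmod_sgnZ a : Cmod (sgnZ a) = 1%R.
Proof. unfold sgnZ. destruct (Z.even a). apply Cmod_1.
  rewrite Cmod_R. rewrite Rabs_left by lra. lra. Qed.

Lemma Cplus_plus (x y : C) : @plus C_AbelianMonoid x y = x + y.
Proof. reflexivity. Qed.

Lemma sum_n_first {G : AbelianMonoid} (a : nat -> G) n :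
  sum_n a (S n) = plus (a 0%nat) (sum_n (fun j => a (S j)) n).
Proof.
  induction n.
  - rewrite sum_Sn, !sum_O. reflexivity.
  - rewrite sum_Sn, IHn, sum_Sn. symmetry. apply plus_assoc.
Qed.

Ltac cplus := repeat match goal with |- context [@plus ?G ?x ?y] => change (@plus G x y) with (Cplus x y) end.

Definition isZ (f : Z -> C) (Sm : C) :=
  exists S1 S2 : C, is_series (fun j:nat => f (Z.of_nat j)) S1 /\
    is_series (fun j:nat => f (- Z.of_nat (S j))%Z) S2 /\ Sm = S1 + S2.

Definition symS (f : Z -> C) (M : nat) : C :=
  sum_n (fun j => f (Z.of_nat j - Z.of_nat M)%Z) (2 * M).

Lemma symS_S f M : symS f (S M) =
  sum_n (fun j:nat => f (Z.of_nat j)) (S M) + sum_n (fun j:nat => f (- Z.of_nat (S j))%Z) M.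
Proof.
  induction M.
  - unfold symS. simpl. rewrite !sum_Sn, !sum_O. cplus.
    simpl. ring.
  - unfold symS in *.
    replace (2 * S (S M))%nat with (S (S (2 * S M))) by lia.
    rewrite sum_n_first, sum_Sn.
    rewrite (sum_n_ext (fun j : nat => f (Z.of_nat (S j) - Z.of_nat (S (S M)))%Z)
       (fun j : nat => f (Z.of_nat j - Z.of_nat (S M))%Z)) by (intro; f_equal; lia).
    rewrite IHM. rewrite (sum_Sn (fun j:nat => f (Z.of_nat j)) (S M)), (sum_Sn (fun j:nat => f (- Z.of_nat (S j))%Z) M). cplus.
    replace (Z.of_nat 0 - Z.of_nat (S (S M)))%Z with (- Z.of_nat (S (S M)))%Z by lia.
    replace (Z.of_nat (S (S (2 * S M))) - Z.of_nat (S (S M)))%Z with (Z.of_nat (S (S M))) by lia.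
    ring.
Qed.

Lemma lim_Re (s : nat -> C) l : filterlim s eventually (locally l) ->
  is_lim_seq (fun n => Re (s n)) (Re l).
Proof.
  intro H. unfold is_lim_seq. simpl.
  apply (filterlim_comp _ _ _ s fst _ _ _ H).
  apply filterlim_locally. intros eps. exists eps. intros y [H1 H2]. exact H1.
Qed.

Lemma lim_Im (s : nat -> C) l : filterlim s eventually (locally l) ->
  is_lim_seq (fun n => Im (s n)) (Im l).
Proof.
  intro H. unfold is_lim_seq. simpl.
  apply (filterlim_comp _ _ _ s snd _ _ _ H).
  apply filterlim_locally. intros eps. exists eps. intros y [H1 H2]. exact H2.
Qed.

Lemma Clim_correct s l : filterlim s eventually (locally l) -> Clim s = l.
Proof.
  intro H. unfold Clim.
  rewrite (is_lim_seq_unique _ _ (lim_Re s l H)), (is_lim_seq_unique _ _ (lim_Im s l H)).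
  simpl. destruct l; reflexivity.
Qed.

Lemma limC_plus {T} {F} {FF : Filter F} (a b : T -> C) la lb :
  filterlim a F (locally la) -> filterlim b F (locally lb) ->
  filterlim (fun n => a n + b n) F (locally (la + lb)).
Proof.
  intros Ha Hb.
  exact (filterlim_comp_2 a b (@plus C_NormedModule) Ha Hb (@filterlim_plus _ C_NormedModule la lb)).
Qed.

Lemma isZ_sumZ f Sm : isZ f Sm -> sumZ f = Sm.
Proof.
  intros (S1 & S2 & H1 & H2 & ->).
  unfold sumZ. apply Clim_correct. fold (symS f).
  apply filterlim_ext_loc with
    (fun M => Cplus (sum_n (fun j:nat => f (Z.of_nat j)) M)
                   (sum_n (fun j:nat => f (- Z.of_nat (S j))%Z) (pred M))).
  - exists 1%nat. intros [|M] HM; [lia|]. rewrite symS_S. reflexivity.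
  - apply limC_plus; [exact H1|].
    apply (filterlim_comp _ _ _ pred (sum_n (fun j:nat => f (- Z.of_nat (S j))%Z)) _ eventually); [|exact H2].
    intros P [N HN]. exists (S N). intros n Hn. apply HN. lia.
Qed.

Definition AS (f : Z -> C) := exists (c rho : R) (K : Z), (0 <= c)%R /\ (0 < rho < 1)%R /\
  forall k, (K <= Z.abs k)%Z -> (Cmod (f k) <= c * rho ^ (Z.abs_nat k))%R.

Lemma ex_series_geomc (c rho : R) N : (0 < rho < 1)%R ->
  ex_series (fun k => c * rho ^ (N + k))%R.
Proof.
  intro Hr.
  apply ex_series_ext with (fun k => (rho ^ k * (c * rho ^ N))%R).
  - intro k. rewrite pow_add, Rmult_comm, Rmult_assoc. reflexivity.
  - apply ex_series_scal_r, ex_series_geom. rewrite Rabs_pos_eq; lra.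
Qed.

Lemma AS_ex f : AS f -> ex_series (fun j:nat => f (Z.of_nat j)) /\
                         ex_series (fun j:nat => f (- Z.of_nat (S j))%Z).
Proof.
  intros (c & rho & K & Hc & Hr & Hb). split.
  - apply (ex_series_incr_n _ (Z.to_nat K)).
    apply (@ex_series_le C_AbsRing C_CompleteNormedModule _ (fun k => c * rho ^ (Z.to_nat K + k))%R).
    + intro k. change (Cmod (f (Z.of_nat (Z.to_nat K + k))) <= c * rho ^ (Z.to_nat K + k))%R.
      eapply Rle_trans; [apply Hb; lia|]. right.
      replace (Z.abs_nat (Z.of_nat (Z.to_nat K + k))) with (Z.to_nat K + k)%nat by lia. reflexivity.
    + apply ex_series_geomc; auto.
  - apply (ex_series_incr_n _ (Z.to_nat K)).
    apply (@ex_series_le C_AbsRing C_CompleteNormedModule _ (fun k => c * rho ^ (S (Z.to_nat K) + k))%R).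
    + intro k. change (Cmod (f (- Z.of_nat (S (Z.to_nat K + k)))%Z) <= c * rho ^ (S (Z.to_nat K) + k))%R.
      eapply Rle_trans; [apply Hb; lia|]. right.
      replace (Z.abs_nat (- Z.of_nat (S (Z.to_nat K + k)))) with (S (Z.to_nat K) + k)%nat by lia. reflexivity.
    + apply ex_series_geomc; auto.
Qed.

Lemma AS_isZ f : AS f -> isZ f (sumZ f).
Proof.
  intro H. destruct (AS_ex f H) as [[S1 H1] [S2 H2]].
  assert (isZ f (S1 + S2)) by (exists S1, S2; auto).
  rewrite (isZ_sumZ f (S1+S2) H0). exact H0.
Qed.

Lemma isZ_scal f V c : isZ f V -> isZ (fun k => c * f k) (c * V).
Proof.
  intros (S1 & S2 & H1 & H2 & ->). exists (c * S1), (c * S2). repeat split.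
  - exact (is_series_scal_l c _ _ H1).
  - exact (is_series_scal_l c _ _ H2).
  - ring.
Qed.

Lemma isZ_plus f g V W : isZ f V -> isZ g W -> isZ (fun k => f k + g k) (V + W).
Proof.
  intros (S1 & S2 & H1 & H2 & ->) (T1 & T2 & G1 & G2 & ->).
  exists (S1 + T1), (S2 + T2). repeat split.
  - exact (is_series_plus _ _ _ _ H1 G1).
  - exact (is_series_plus _ _ _ _ H2 G2).
  - ring.
Qed.

Lemma isZ_ext f g V : (forall k, f k = g k) -> isZ f V -> isZ g V.
Proof.
  intros E (S1 & S2 & H1 & H2 & ->). exists S1, S2. repeat split.
  - apply (is_series_ext _ _ _ (fun j => E _) H1).
  - apply (is_series_ext _ _ _ (fun j => E _) H2).
Qed.

Lemma isZ_sum (F : nat -> Z -> C) (V : nat -> C) N :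
  (forall j, (j <= N)%nat -> isZ (F j) (V j)) ->
  isZ (fun k => sum_n (fun j => F j k) N) (sum_n V N).
Proof.
  induction N; intro H.
  - rewrite sum_O. apply isZ_ext with (F 0%nat). intro; rewrite sum_O; auto. apply H; lia.
  - rewrite sum_Sn. cplus.
    apply isZ_ext with (fun k => sum_n (fun j => F j k) N + F (S N) k).
    + intro k. rewrite sum_Sn. reflexivity.
    + apply isZ_plus. apply IHN; intros; apply H; lia. apply H; lia.
Qed.

Lemma sumZ_scal f c : AS f -> sumZ (fun k => c * f k) = c * sumZ f.
Proof. intro H. apply isZ_sumZ, isZ_scal, AS_isZ, H. Qed.

Lemma sumZ_ext f g : (forall k, f k = g k) -> sumZ f = sumZ g.
Proof. intro E. f_equal. apply functional_extensionality, E. Qed.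

Lemma sumZ_sum (F : nat -> Z -> C) N : (forall j, (j <= N)%nat -> AS (F j)) ->
  sumZ (fun k => sum_n (fun j => F j k) N) = sum_n (fun j => sumZ (F j)) N.
Proof.
  intro H. apply isZ_sumZ, isZ_sum. intros j Hj. apply AS_isZ, H, Hj.
Qed.

Lemma sumZ_zero : sumZ (fun _ => 0) = 0.
Proof.
  apply isZ_sumZ. exists (RtoC 0), (RtoC 0). repeat split.
  - apply (is_series_ext (fun _ => zero)). reflexivity.
    apply filterlim_ext with (fun _ => zero). intro n. induction n. rewrite sum_O; auto.
    rewrite sum_Sn, <- IHn. symmetry. apply plus_zero_r.
    apply filterlim_const.
  - apply (is_series_ext (fun _ => zero)). reflexivity.
    apply filterlim_ext with (fun _ => zero). intro n. induction n. rewrite sum_O; auto.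
    rewrite sum_Sn, <- IHn. symmetry. apply plus_zero_r.
    apply filterlim_const.
  - ring.
Qed.

Lemma AS_le f g : (forall k, Cmod (g k) <= Cmod (f k))%R -> AS f -> AS g.
Proof.
  intros Hle (c & rho & K & Hc & Hr & Hb). exists c, rho, K. split; [auto|split; [auto|]].
  intros k Hk. eapply Rle_trans; [apply Hle | apply Hb, Hk].
Qed.

Lemma pow_le1' (rho : R) n : (0 < rho < 1)%R -> (rho ^ n <= 1)%R.
Proof. intro Hr. induction n; simpl. lra. assert (0 <= rho ^ n)%R by (apply pow_le; lra). nra. Qed.

Lemma pow_le_dec (rho : R) a b : (0 < rho < 1)%R -> (b <= a)%nat -> (rho ^ a <= rho ^ b)%R.
Proof.
  intros Hr Hab. replace a with (b + (a - b))%nat by lia. rewrite pow_add.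
  assert (0 <= rho ^ b)%R by (apply pow_le; lra).
  assert (rho ^ (a - b) <= 1)%R by (apply pow_le1'; lra). nra.
Qed.

Lemma AS_sub f (l r : Z) : (0 < l)%Z -> AS f -> AS (fun m => f (m * l + r)%Z).
Proof.
  intros Hl (c & rho & K & Hc & Hr & Hb).
  exists (c / rho ^ (Z.abs_nat r))%R, rho, (Z.abs K + Z.abs r)%Z.
  assert (Hp : (0 < rho ^ (Z.abs_nat r))%R) by (apply pow_lt; lra).
  split; [|split; [auto|]].
  - apply Rmult_le_pos; auto. left; apply Rinv_0_lt_compat; auto.
  - intros m Hm.
    assert (H1 : (Z.abs m <= Z.abs (m * l))%Z).
    { rewrite Z.abs_mul. nia. }
    eapply Rle_trans. apply Hb. lia.
    unfold Rdiv. rewrite Rmult_assoc. apply Rmult_le_compat_l; auto.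
    apply (Rmult_le_reg_l (rho ^ Z.abs_nat r)); auto.
    rewrite <- pow_add.
    replace (rho ^ Z.abs_nat r * (/ rho ^ Z.abs_nat r * rho ^ Z.abs_nat m))%R
      with (rho ^ Z.abs_nat m)%R by (field; lra).
    apply pow_le_dec; auto. lia.
Qed.

Ltac csimp := repeat match goal with
  | |- context [@plus ?G ?x ?y] => change (@plus G x y) with (Cplus x y)
  | |- context [@opp ?G ?x] => change (@opp G x) with (Copp x)
  | |- context [@scal ?K ?G ?x ?y] => change (@scal K G x y) with (Cmult x y)
  | |- context [@mult ?G ?x ?y] => change (@mult G x y) with (Cmult x y)
  end.

Ltac ceq := match goal with |- @eq _ ?x ?y => change (@eq C x y) end.

Definition Cser (a : nat -> C) : C := Clim (sum_n a).

Lemma Cser_correct a l : is_series a l -> Cser a = l.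
Proof. intro H. apply Clim_correct, H. Qed.

Lemma Cser_ex a : ex_series a -> is_series a (Cser a).
Proof. intros [l H]. rewrite (Cser_correct a l H). exact H. Qed.

Lemma isZ_shift1 f V : isZ f V -> isZ (fun k => f (k + 1)%Z) V.
Proof.
  intros (S1 & S2 & H1 & H2 & ->).
  exists (S1 - f 0%Z), (S2 + f 0%Z). split; [|split].
  - apply (is_series_ext (fun j:nat => f (Z.of_nat (S j)))). intro; f_equal; lia.
    apply (is_series_incr_1 (fun j:nat => f (Z.of_nat j))).
    assert (E : S1 = plus (S1 - f 0%Z) (f (Z.of_nat 0))) by (csimp; simpl; ring). rewrite E in H1. exact H1.
  - apply (is_series_ext (fun j:nat => f (- Z.of_nat j)%Z)). intro; f_equal; lia.
    apply is_series_decr_1.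
    assert (E : S2 = plus (S2 + f 0%Z) (opp (f (- Z.of_nat 0)%Z))) by (csimp; simpl; ring). rewrite E in H2.
    apply (is_series_ext (fun j:nat => f (- Z.of_nat (S j))%Z)). intro; f_equal; lia. exact H2.
  - ring.
Qed.

Lemma isZ_shiftm1 f V : isZ f V -> isZ (fun k => f (k - 1)%Z) V.
Proof.
  intros (S1 & S2 & H1 & H2 & ->).
  exists (S1 + f (-1)%Z), (S2 - f (-1)%Z). split; [|split].
  - apply is_series_decr_1.
    assert (E : S1 = plus (S1 + f (-1)%Z) (opp (f (Z.of_nat 0 - 1)%Z))) by (csimp; simpl; ring). rewrite E in H1.
    apply (is_series_ext (fun j:nat => f (Z.of_nat j))). intro; f_equal; lia. exact H1.
  - apply (is_series_ext (fun j:nat => f (- Z.of_nat (S (S j)))%Z)). intro; f_equal; lia.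
    apply (is_series_incr_1 (fun j:nat => f (- Z.of_nat (S j))%Z)).
    assert (E : S2 = plus (S2 - f (-1)%Z) (f (- Z.of_nat 1)%Z)) by (csimp; simpl; ring). rewrite E in H2. exact H2.
  - ring.
Qed.

Lemma isZ_shift f V c : isZ f V -> isZ (fun k => f (k + c)%Z) V.
Proof.
  intro H. induction c using Z.peano_ind.
  - apply isZ_ext with f; [intro; f_equal; lia | exact H].
  - apply isZ_ext with (fun k => f (k + 1 + c)%Z); [intro; f_equal; lia|].
    apply (isZ_shift1 (fun k => f (k + c)%Z)), IHc.
  - apply isZ_ext with (fun k => f (k - 1 + c)%Z); [intro; f_equal; lia|].
    apply (isZ_shiftm1 (fun k => f (k + c)%Z)), IHc.
Qed.

Lemma sumZ_shift f c : AS f -> sumZ (fun k => f (k + c)%Z) = sumZ f.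
Proof. intro H. apply isZ_sumZ, isZ_shift, AS_isZ, H. Qed.

Lemma sum_n_chasles {G : AbelianMonoid} (a : nat -> G) N k :
  sum_n a (N + S k) = plus (sum_n a N) (sum_n (fun i => a (N + S i)%nat) k).
Proof.
  induction k.
  - rewrite sum_O, <- plus_n_Sm, <- plus_n_O, sum_Sn. reflexivity.
  - rewrite <- plus_n_Sm, sum_Sn, IHk, sum_Sn. rewrite plus_assoc. do 2 f_equal. lia.
Qed.

Lemma block_id (a : nat -> C) L q : (1 <= L)%nat ->
  sum_n a (q * L + (L - 1)) = sum_n (fun r => sum_n (fun m => a (m * L + r)%nat) q) (L - 1).
Proof.
  intro HL. induction q.
  - simpl. apply sum_n_ext. intro r. rewrite sum_O. reflexivity.
  - replace (S q * L + (L - 1))%nat with ((q * L + (L - 1)) + S (L - 1))%nat by (simpl; lia).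
    rewrite sum_n_chasles, IHq.
    rewrite <- sum_n_plus. apply sum_n_ext. intro r. rewrite sum_Sn. f_equal. f_equal. simpl. lia.
Qed.

Lemma lim_sum_n {T} {F} {FF : Filter F} (u : nat -> T -> C) (B : nat -> C) N :
  (forall r, (r <= N)%nat -> filterlim (u r) F (locally (B r))) ->
  filterlim (fun x => sum_n (fun r => u r x) N) F (locally (sum_n B N)).
Proof.
  induction N; intro H.
  - rewrite sum_O. apply filterlim_ext with (u 0%nat). intro; rewrite sum_O; auto. apply H; lia.
  - rewrite sum_Sn. csimp. apply filterlim_ext with (fun x => sum_n (fun r => u r x) N + u (S N) x).
    intro; rewrite sum_Sn; reflexivity.
    apply limC_plus. apply IHN; intros; apply H; lia. apply H; lia.
Qed.

Lemma block (a : nat -> C) L A (B : nat -> C) : (1 <= L)%nat -> is_series a A ->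
  (forall r, (r <= L - 1)%nat -> is_series (fun m => a (m * L + r)%nat) (B r)) ->
  A = sum_n B (L - 1).
Proof.
  intros HL HA HB.
  apply (filterlim_locally_unique (F := eventually) (fun q => sum_n a (q * L + (L - 1))%nat)).
  - apply (filterlim_comp _ _ _ (fun q => (q * L + (L - 1))%nat) (sum_n a) _ eventually); [|exact HA].
    intros P [N HN]. exists N. intros n Hn. apply HN. nia.
  - apply filterlim_ext with (fun q => sum_n (fun r => sum_n (fun m => a (m * L + r)%nat) q) (L - 1)).
    intro q. symmetry. apply block_id, HL.
    apply lim_sum_n. exact HB.
Qed.

Lemma sum_n_rev (B : nat -> C) N : sum_n B N = sum_n (fun r => B (N - r)%nat) N.
Proof.
  induction N.
  - rewrite !sum_O. reflexivity.
  - rewrite sum_Sn, sum_n_first, IHN. simpl. csimp. ring.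
Qed.

Lemma AS_sumZ_parts f : AS f ->
  sumZ f = Cser (fun j:nat => f (Z.of_nat j)) + Cser (fun j:nat => f (- Z.of_nat (S j))%Z)
  /\ is_series (fun j:nat => f (Z.of_nat j)) (Cser (fun j:nat => f (Z.of_nat j)))
  /\ is_series (fun j:nat => f (- Z.of_nat (S j))%Z) (Cser (fun j:nat => f (- Z.of_nat (S j))%Z)).
Proof.
  intro H. destruct (AS_ex f H) as [E1 E2].
  pose proof (Cser_ex _ E1) as H1. pose proof (Cser_ex _ E2) as H2.
  split; [|split; assumption].
  apply isZ_sumZ. eexists _, _. split; [exact H1|split; [exact H2|reflexivity]].
Qed.

Lemma split0 f L : (1 <= L)%nat -> AS f ->
  sumZ f = sum_n (fun j => sumZ (fun m => f (m * Z.of_nat L + Z.of_nat j)%Z)) (L - 1).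
Proof.
  intros HL Hf.
  set (fr := fun (r : nat) (m : Z) => f (m * Z.of_nat L + Z.of_nat r)%Z).
  assert (Hfr : forall r, AS (fr r)) by (intro r; apply AS_sub; [lia|exact Hf]).
  destruct (AS_sumZ_parts f Hf) as (E & HP & HN).
  rewrite E.
  change (sum_n (fun j => sumZ (fun m => f (m * Z.of_nat L + Z.of_nat j)%Z)) (L - 1))
    with (sum_n (fun j => sumZ (fr j)) (L - 1)).
  rewrite (sum_n_ext (fun j => sumZ (fr j)) (fun j => plus (Cser (fun m:nat => fr j (Z.of_nat m)))
                                    (Cser (fun m:nat => fr j (- Z.of_nat (S m))%Z))))
    by (intro j; destruct (AS_sumZ_parts (fr j) (Hfr j)) as (Ej & _ & _); exact Ej).
  rewrite sum_n_plus. csimp. f_equal.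
  - apply (block (fun j:nat => f (Z.of_nat j)) L _ (fun r => Cser (fun m:nat => fr r (Z.of_nat m)))); [exact HL|exact HP|].
    intros r Hr. destruct (AS_sumZ_parts (fr r) (Hfr r)) as (_ & Hp & _).
    revert Hp. apply is_series_ext. intro m. unfold fr. f_equal. lia.
  - rewrite sum_n_rev.
    apply (block (fun j:nat => f (- Z.of_nat (S j))%Z) L _ (fun r => Cser (fun m:nat => fr (L - 1 - r)%nat (- Z.of_nat (S m))%Z))); [exact HL|exact HN|].
    intros r Hr. destruct (AS_sumZ_parts (fr (L - 1 - r)%nat) (Hfr _)) as (_ & _ & Hn).
    revert Hn. apply is_series_ext. intro m. unfold fr. f_equal. nia.
Qed.

Lemma split_I f n l : (0 < l)%Z -> AS f ->
  sumZ f = sumI n l (fun r => sumZ (fun m => f (m * l + r)%Z)).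
Proof.
  intros Hl Hf.
  rewrite <- (sumZ_shift f n Hf).
  rewrite (sumZ_ext _ (fun m => f (m * 1 + n)%Z)) by (intro; f_equal; lia).
  rewrite (split0 _ (Z.to_nat l)); [| lia | exact (AS_sub f 1 n ltac:(lia) Hf)].
  unfold sumI. replace (Z.to_nat l - 1)%nat with (Z.to_nat (l - 1)) by lia.
  apply sum_n_ext. intro j. apply sumZ_ext. intro m. f_equal. lia.
Qed.

Lemma CZ_neq0 l : l <> 0%Z -> CZ l <> 0.
Proof. intros Hl H. apply (f_equal Re) in H. unfold CZ in H. simpl in H. apply Hl. apply eq_IZR. exact H. Qed.

Lemma xi_add l a b : l <> 0%Z -> xi l a * xi l b = xi l (a + b).
Proof.
  intro Hl. unfold xi. rewrite <- Cexp_add. f_equal. rewrite CZ_add.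
  field. apply CZ_neq0, Hl.
Qed.

Lemma xi_mult_l l m : l <> 0%Z -> xi l (m * l) = 1.
Proof.
  intro Hl. unfold xi. rewrite <- (Cexp_int m). f_equal. rewrite CZ_mul.
  field. apply CZ_neq0, Hl.
Qed.

Lemma xi_form l k : l <> 0%Z -> twoPiI * CZ k / CZ l = (0, 2 * PI * (IZR k / IZR l))%R.
Proof.
  intro Hl. assert (IZR l <> 0)%R by (apply not_0_IZR, Hl).
  unfold twoPiI, CZ. apply injective_projections; simpl; field; auto.
Qed.

Lemma Cmod_xi l k : l <> 0%Z -> Cmod (xi l k) = 1%R.
Proof. intro Hl. unfold xi. rewrite Cmod_Cexp, xi_form by exact Hl. simpl. apply exp_0. Qed.

Lemma xi_neq1 l d : (0 < l)%Z -> (d mod l <> 0)%Z -> xi l d <> 1.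
Proof.
  intros Hl Hd H. unfold xi in H. rewrite xi_form in H by lia.
  unfold Cexp in H. simpl in H. rewrite exp_0 in H.
  apply (f_equal fst) in H. simpl in H. rewrite Rmult_1_l in H.
  set (th := (2 * PI * (IZR d / IZR l))%R) in H.
  replace th with (2 * (th / 2))%R in H by field.
  rewrite cos_2a_sin in H.
  assert (Hs : sin (th / 2) = 0%R) by nra.
  apply sin_eq_0_0 in Hs. destruct Hs as [k Hk].
  unfold th in Hk.
  assert (IZR l <> 0)%R by (apply not_0_IZR; lia).
  assert (Hd' : IZR d = (IZR k * IZR l)%R).
  { pose proof PI_RGT_0. apply (Rmult_eq_reg_l PI); [|lra].
    assert (E : (2 * PI * (IZR d / IZR l) / 2 * IZR l)%R = (IZR k * PI * IZR l)%R) by (rewrite Hk; reflexivity).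
    replace (PI * IZR d)%R with (2 * PI * (IZR d / IZR l) / 2 * IZR l)%R by (field; auto).
    rewrite E. ring. }
  rewrite <- mult_IZR in Hd'. apply eq_IZR in Hd'. subst d.
  apply Hd. apply Z_mod_mult.
Qed.

Lemma sum_n_zero N : sum_n (fun _ : nat => RtoC 0) N = RtoC 0.
Proof. induction N. rewrite sum_O; reflexivity. rewrite sum_Sn, IHN. csimp. ceq. ring. Qed.

Lemma sum_n_one N : sum_n (fun _ : nat => RtoC 1) N = RtoC (INR (S N)).
Proof. induction N. rewrite sum_O; simpl; reflexivity. rewrite sum_Sn, IHN. csimp.
  rewrite (S_INR (S N)). rewrite RtoC_plus. reflexivity. Qed.

Lemma sum_n_Cmult_l (c : C) (u : nat -> C) N : sum_n (fun k => c * u k) N = c * sum_n u N.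
Proof. induction N. rewrite !sum_O; reflexivity. rewrite !sum_Sn, IHN. csimp. ceq. ring. Qed.

Lemma sum_n_Cmult_r (c : C) (u : nat -> C) N : sum_n (fun k => u k * c) N = sum_n u N * c.
Proof. induction N. rewrite !sum_O; reflexivity. rewrite !sum_Sn, IHN. csimp. ceq. ring. Qed.

Definition delta (l d : Z) : C := if Z.eqb (d mod l) 0 then 1 else 0.

Lemma orth n l d : (0 < l)%Z -> sumI n l (fun s => xi l (s * d)) = delta l d * CZ l.
Proof.
  intro Hl. unfold delta, sumI.
  destruct (Z.eqb_spec (d mod l) 0) as [H0|H0].
  - apply Z_div_exact_2 in H0; [|lia]. set (k := (d / l)%Z) in H0.
    rewrite (sum_n_ext _ (fun _ => RtoC 1)).
    + rewrite sum_n_one. replace (S (Z.to_nat (l - 1))) with (Z.to_nat l) by lia.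
      rewrite INR_IZR_INZ, Z2Nat.id by lia. unfold CZ. ring.
    + intro j. rewrite H0. replace ((n + Z.of_nat j) * (l * k))%Z with (((n + Z.of_nat j) * k) * l)%Z by ring.
      apply xi_mult_l. lia.
  - set (h := fun j:nat => xi l ((n + Z.of_nat j) * d)).
    change (sum_n h (Z.to_nat (l - 1)) = 0 * CZ l).
    assert (Hw := xi_neq1 l d Hl H0).
    assert (E1 : sum_n h (S (Z.to_nat (l - 1))) = h 0%nat + xi l d * sum_n h (Z.to_nat (l - 1))).
    { rewrite sum_n_first. csimp. f_equal. rewrite <- sum_n_Cmult_l. apply sum_n_ext. intro j.
      unfold h. csimp. rewrite xi_add by lia. f_equal. lia. }
    assert (E2 : h (S (Z.to_nat (l - 1))) = h 0%nat).
    { unfold h. assert (El : Z.of_nat (S (Z.to_nat (l - 1))) = l) by lia. rewrite El.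
      replace ((n + l) * d)%Z with ((n + Z.of_nat 0) * d + d * l)%Z by (simpl; ring).
      rewrite <- xi_add, xi_mult_l by lia. ring. }
    rewrite sum_Sn, E2 in E1.
    set (T := sum_n h (Z.to_nat (l - 1))) in *.
    change (plus T (h 0%nat) = h 0%nat + xi l d * T) in E1.
    assert (E3 : (xi l d - 1) * T = 0).
    { transitivity ((h 0%nat + xi l d * T) - (T + h 0%nat)). ring.
      rewrite <- E1. change (plus T (h 0%nat)) with (T + h 0%nat). ring. }
    assert (Hw' : xi l d - 1 <> 0).
    { intro H. apply Hw. replace (xi l d) with ((xi l d - 1) + 1) by ring. rewrite H. ring. }
    replace T with ((xi l d - 1) * T / (xi l d - 1)).
    + rewrite E3. ceq. field. exact Hw'.
    + ceq. field. exact Hw'.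
Qed.

Lemma AS_mul_xi f l a : l <> 0%Z -> AS f -> AS (fun k => f k * xi l (a k)).
Proof.
  intros Hl. apply AS_le. intro k. rewrite Cmod_mult, Cmod_xi by exact Hl. lra.
Qed.

Lemma AS_mul_xi' f l a : l <> 0%Z -> AS f -> AS (fun k => xi l (a k) * f k).
Proof.
  intros Hl. apply AS_le. intro k. rewrite Cmod_mult, Cmod_xi by exact Hl. lra.
Qed.

Lemma Cmod_delta l d : (Cmod (delta l d) <= 1)%R.
Proof. unfold delta. destruct (Z.eqb _ _). rewrite Cmod_1; lra. rewrite Cmod_0; lra. Qed.

Lemma key2 f n l t : (0 < l)%Z -> AS f ->
  sumZ (fun k => f k * xi l (t * k)) =
  sumI n l (fun s => xi l (t * s) * sumZ (fun m => f (m * l + s)%Z)).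
Proof.
  intros Hl Hf.
  rewrite (split_I _ n l Hl (AS_mul_xi f l _ ltac:(lia) Hf)).
  unfold sumI. apply sum_n_ext. intro j.
  rewrite <- sumZ_scal by (apply AS_sub; auto).
  apply sumZ_ext. intro m.
  replace (t * (m * l + (n + Z.of_nat j)))%Z with ((t * m) * l + t * (n + Z.of_nat j))%Z by ring.
  rewrite <- xi_add, xi_mult_l by lia. ring.
Qed.

Lemma key1 f n l t : (0 < l)%Z -> AS f ->
  sumZ (fun m => f (m * l + t)%Z) =
  RtoC (/ IZR l) * sumI n l (fun s => xi l (- (t * s)) * sumZ (fun k => f k * xi l (s * k))).
Proof.
  intros Hl Hf.
  assert (Hl0 : l <> 0%Z) by lia.
  unfold sumI.
  rewrite (sum_n_ext _ (fun j => sumZ (fun k => xi l ((n + Z.of_nat j) * (k - t)) * f k))).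
  2:{ intro j. rewrite <- sumZ_scal by (apply AS_mul_xi; auto). apply sumZ_ext. intro k.
      transitivity ((xi l (- (t * (n + Z.of_nat j))) * xi l ((n + Z.of_nat j) * k)) * f k). ring.
      rewrite xi_add by auto. f_equal. f_equal. ring. }
  rewrite <- (sumZ_sum (fun j k => xi l ((n + Z.of_nat j) * (k - t)) * f k))
    by (intros; apply AS_mul_xi'; auto).
  rewrite (sumZ_ext (fun k => sum_n (fun j => xi l ((n + Z.of_nat j) * (k - t)) * f k) (Z.to_nat (l - 1))) (fun k => CZ l * (delta l (k - t) * f k))).
  2:{ intro k. transitivity (sum_n (fun j => xi l ((n + Z.of_nat j) * (k - t))) (Z.to_nat (l - 1)) * f k).
      apply (sum_n_Cmult_r (f k) (fun j => xi l ((n + Z.of_nat j) * (k - t)))).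
      pose proof (orth n l (k - t) Hl) as Ho. unfold sumI in Ho. rewrite Ho. ring. }
  assert (Hd : AS (fun k => delta l (k - t) * f k)).
  { apply (AS_le f). intro k. rewrite Cmod_mult. pose proof (Cmod_delta l (k - t)).
    pose proof (Cmod_ge_0 (f k)). nra. exact Hf. }
  rewrite sumZ_scal by exact Hd.
  replace (RtoC (/ IZR l) * (CZ l * sumZ (fun k => delta l (k - t) * f k)))
    with (sumZ (fun k => delta l (k - t) * f k)).
  2:{ unfold CZ. rewrite Cmult_assoc, <- RtoC_mult, Rinv_l. ring. apply not_0_IZR; lia. }
  rewrite (split_I _ t l Hl Hd). unfold sumI.
  destruct (Z.to_nat (l - 1)) as [|N] eqn:EN.
  - rewrite sum_O. apply sumZ_ext. intro m. unfold delta.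
    replace ((m * l + (t + Z.of_nat 0) - t) mod l)%Z with 0%Z.
    simpl. rewrite Z.add_0_r. ring.
    replace (m * l + (t + Z.of_nat 0) - t)%Z with (m * l)%Z by lia. rewrite Z_mod_mult. reflexivity.
  - rewrite sum_n_first.
    rewrite (sum_n_ext_loc _ (fun _ => RtoC 0)).
    + rewrite sum_n_zero. csimp. rewrite Cplus_0_r. apply sumZ_ext. intro m. unfold delta.
      replace ((m * l + (t + Z.of_nat 0) - t) mod l)%Z with 0%Z.
      simpl. rewrite Z.add_0_r. ring.
      replace (m * l + (t + Z.of_nat 0) - t)%Z with (m * l)%Z by lia. rewrite Z_mod_mult. reflexivity.
    + intros j Hj. rewrite <- sumZ_zero. apply sumZ_ext. intro m. unfold delta.
      replace ((m * l + (t + Z.of_nat (S j)) - t) mod l)%Z with (Z.of_nat (S j)).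
      * destruct (Z.eqb_spec (Z.of_nat (S j)) 0); [lia|]. ring.
      * replace (m * l + (t + Z.of_nat (S j)) - t)%Z with (Z.of_nat (S j) + m * l)%Z by ring.
        rewrite Z_mod_plus_full. rewrite Z.mod_small; lia.
Qed.

Definition gA (a : Z) (n' : R) (u v tau : C) (k : Z) : C :=
    sgnZ k * Cexp (twoPiI * v * CZ k)
    * Cexp (twoPiI * u * (CZ (a * k) + RtoC n' + RtoC (/2)))
    * Cexp (PiI * tau * CZ k * (CZ k * CZ (2 * a + 1) + RtoC (2 * n') + RtoC 1))
    / (RtoC 1 - Cexp (twoPiI * (u + CZ k * tau))).

Definition preA (u tau : C) := - Ci * theta1 u tau / (eta tau * eta tau * eta tau).

Lemma chiA_nl n l n' t u v tau :
  chiA n l n' t u v tau = preA u tau * sumZ (fun m => gA (n / l) n' u v tau (m * l + t)%Z).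
Proof. reflexivity. Qed.

Lemma chiA_a1 a n' u v tau : chiA a 1 n' 0 u v tau = preA u tau * sumZ (gA a n' u v tau).
Proof.
  unfold chiA. rewrite Z.div_1_r. f_equal. apply sumZ_ext. intro m.
  rewrite Z.mul_1_r, Z.add_0_r. reflexivity.
Qed.

Lemma exp_shift l s k v : l <> 0%Z ->
  Cexp (twoPiI * (v + CZ s / CZ l) * CZ k) = Cexp (twoPiI * v * CZ k) * xi l (s * k).
Proof.
  intro Hl. unfold xi. rewrite <- Cexp_add. f_equal. rewrite CZ_mul. field. apply CZ_neq0, Hl.
Qed.

Lemma gA_shift a n' u v tau l s k : l <> 0%Z ->
  gA a n' u (v + CZ s / CZ l) tau k = gA a n' u v tau k * xi l (s * k).
Proof.
  intro Hl. unfold gA. rewrite exp_shift by exact Hl. unfold Cdiv. ring.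
Qed.

Lemma sumI_pull n l (c : C) (F : Z -> C) :
  sumI n l (fun s => c * F s) = c * sumI n l F.
Proof. unfold sumI. apply sum_n_Cmult_l. Qed.

Lemma sumI_ext n l (F G : Z -> C) : (forall s, F s = G s) -> sumI n l F = sumI n l G.
Proof. intro E. unfold sumI. apply sum_n_ext. intro; apply E. Qed.

Lemma atyp1 a n l n' t u v tau : (0 < l)%Z -> (n / l)%Z = a ->
  (forall v, AS (gA a n' u v tau)) ->
  chiA n l n' t u v tau =
      RtoC (/ IZR l) * sumI n l (fun s =>
        xi l (- (t * s)) * chiA a 1 n' 0 u (v + CZ s / CZ l) tau).
Proof.
  intros Hl Ha HAS.
  rewrite chiA_nl, Ha, (key1 _ n l t Hl (HAS v)).
  rewrite (sumI_ext _ _ (fun s => xi l (- (t * s)) * chiA a 1 n' 0 u (v + CZ s / CZ l) tau) (fun s => preA u tau * (xi l (- (t * s)) * sumZ (fun k => gA a n' u v tau k * xi l (s * k))))).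
  - rewrite sumI_pull. ring.
  - intro s. rewrite chiA_a1. rewrite (sumZ_ext _ (fun k => gA a n' u v tau k * xi l (s * k))).
    ring. intro k. apply gA_shift. lia.
Qed.

Lemma atyp2 a n l n' t u v tau : (0 < l)%Z -> (n / l)%Z = a ->
  (forall v, AS (gA a n' u v tau)) ->
  chiA a 1 n' 0 u (v + CZ t / CZ l) tau =
      sumI n l (fun s => xi l (t * s) * chiA n l n' s u v tau).
Proof.
  intros Hl Ha HAS.
  rewrite chiA_a1. rewrite (sumZ_ext _ (fun k => gA a n' u v tau k * xi l (t * k)))
    by (intro k; apply gA_shift; lia).
  rewrite (key2 _ n l t Hl (HAS v)).
  rewrite <- sumI_pull. apply sumI_ext. intro s. rewrite chiA_nl, Ha. ring.
Qed.

Definition HT (a : Z) (n' e' u v tau : C) (k : Z) : C :=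
    sgnZ (k * 1) * Cexp (twoPiI * v * (e' + CZ (k * 1)))
    * Cexp (twoPiI * u * (n' + CZ (k * a)))
    * Cexp (twoPiI * tau *
        (n' * e' + e' * e' / RtoC 2
         + CZ (k * k) / RtoC 2 * CZ (2 * a * 1 + 1 * 1)
         + CZ k * (CZ a * e' + n' * CZ 1 + CZ 1 * e'))).

Definition preT (e' u tau : C) := Ci * sgnZ (floorRe e') * theta1 u tau / (eta tau * eta tau * eta tau).

Lemma chiT_a1 a n' e' u v tau : chiT a 1 n' e' u v tau = preT e' u tau * sumZ (HT a n' e' u v tau).
Proof. reflexivity. Qed.

Lemma floorRe_add e t : floorRe (e + CZ t) = (floorRe e + t)%Z.
Proof.
  unfold floorRe. symmetry. apply Int_part_spec.
  destruct (base_Int_part (Re e)) as [H1 H2].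
  replace (Re (e + CZ t)) with (Re e + IZR t)%R by (unfold CZ, Re; simpl; ring).
  rewrite plus_IZR. lra.
Qed.

Lemma HT_shift a n' e' u v tau l s k : l <> 0%Z ->
  HT a n' e' u (v + CZ s / CZ l) tau k =
  Cexp (twoPiI * e' * CZ s / CZ l) * (HT a n' e' u v tau k * xi l (s * k)).
Proof.
  intro Hl. unfold HT, xi.
  assert (E : Cexp (twoPiI * (v + CZ s / CZ l) * (e' + CZ (k * 1))) =
     Cexp (twoPiI * e' * CZ s / CZ l) * (Cexp (twoPiI * v * (e' + CZ (k * 1))) * Cexp (twoPiI * CZ (s * k) / CZ l))).
  { rewrite <- !Cexp_add. f_equal. rewrite Z.mul_1_r, CZ_mul. field. apply CZ_neq0, Hl. }
  rewrite E. ring.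
Qed.

Lemma HT_nl a n l n' e' t u v tau m : n = (a * l)%Z ->
  sgnZ (m * l) * Cexp (twoPiI * v * ((e' + CZ t) + CZ (m * l)))
    * Cexp (twoPiI * u * ((n' + CZ (t * a)) + CZ (m * n)))
    * Cexp (twoPiI * tau *
        ((n' + CZ (t * a)) * (e' + CZ t) + (e' + CZ t) * (e' + CZ t) / RtoC 2
         + CZ (m * m) / RtoC 2 * CZ (2 * n * l + l * l)
         + CZ m * (CZ n * (e' + CZ t) + (n' + CZ (t * a)) * CZ l + CZ l * (e' + CZ t))))
  = sgnZ t * HT a n' e' u v tau (m * l + t).
Proof.
  intro Hn. subst n. unfold HT.
  rewrite Z.mul_1_r, sgnZ_add.
  rewrite <- !Cmult_assoc. rewrite (Cmult_assoc (sgnZ t) (sgnZ (m * l))), (Cmult_comm (sgnZ t) (sgnZ (m*l))).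
  rewrite <- (Cmult_assoc (sgnZ (m * l)) (sgnZ t)), (Cmult_assoc (sgnZ t) (sgnZ t)), sgnZ_sq, Cmult_1_l.
  f_equal.
  rewrite <- !Cexp_add. f_equal.
  rewrite !CZ_mul, !CZ_add, !CZ_mul. change (CZ 1) with (RtoC 1). change (CZ 2) with (RtoC 2).
  field.
Qed.

Lemma chiT_nl a n l n' e' t u v tau : (0 < l)%Z -> n = (a * l)%Z ->
  AS (HT a n' e' u v tau) ->
  chiT n l (n' + CZ (t * a)) (e' + CZ t) u v tau = preT e' u tau * sumZ (fun m => HT a n' e' u v tau (m * l + t)%Z).
Proof.
  intros Hl Hn HA. unfold chiT. rewrite floorRe_add, sgnZ_add.
  rewrite (sumZ_ext _ (fun m => sgnZ t * HT a n' e' u v tau (m * l + t)%Z))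
    by (intro m; apply HT_nl; auto).
  rewrite sumZ_scal by (apply AS_sub; auto).
  set (X := sumZ (fun m => HT a n' e' u v tau (m * l + t)%Z)).
  transitivity (Ci * sgnZ (floorRe e') * theta1 u tau / (eta tau * eta tau * eta tau) * ((sgnZ t * sgnZ t) * X)).
  unfold Cdiv; ring. rewrite sgnZ_sq. unfold preT. ring.
Qed.

Lemma Cexp_opp_mul z : Cexp (- z) * Cexp z = 1.
Proof. rewrite <- Cexp_add. replace (- z + z) with (RtoC 0) by ring. apply Cexp_0. Qed.

Lemma typ3 a n l n' e' t u v tau : (0 < l)%Z -> n = (a * l)%Z ->
  (forall v, AS (HT a n' e' u v tau)) ->
  chiT n l (n' + CZ (t * a)) (e' + CZ t) u v tau =
      RtoC (/ IZR l) * sumI n l (fun s =>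
        xi l (- (s * t)) * Cexp (- (twoPiI * e' * CZ s / CZ l))
        * chiT a 1 n' e' u (v + CZ s / CZ l) tau).
Proof.
  intros Hl Hn HA.
  rewrite (chiT_nl a n l n' e' t u v tau Hl Hn (HA v)), (key1 _ n l t Hl (HA v)).
  rewrite (sumI_ext _ _ (fun s => xi l (- (s * t)) * Cexp (- (twoPiI * e' * CZ s / CZ l))
        * chiT a 1 n' e' u (v + CZ s / CZ l) tau)
     (fun s => preT e' u tau * (xi l (- (t * s)) * sumZ (fun k => HT a n' e' u v tau k * xi l (s * k))))).
  - rewrite sumI_pull. ring.
  - intro s. rewrite chiT_a1.
    rewrite (sumZ_ext _ (fun k => Cexp (twoPiI * e' * CZ s / CZ l) * (HT a n' e' u v tau k * xi l (s * k))))
      by (intro k; apply HT_shift; lia).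
    rewrite sumZ_scal by (apply AS_mul_xi; [lia | apply HA]).
    rewrite (Z.mul_comm s t).
    set (E := twoPiI * e' * CZ s / CZ l).
    transitivity (preT e' u tau * (xi l (- (t * s)) * sumZ (fun k => HT a n' e' u v tau k * xi l (s * k))) * (Cexp (- E) * Cexp E)).
    ring. rewrite Cexp_opp_mul. ring.
Qed.

Lemma typ4 a n l n' e' s u v tau : (0 < l)%Z -> n = (a * l)%Z ->
  (forall v, AS (HT a n' e' u v tau)) ->
  chiT a 1 n' e' u (v + CZ s / CZ l) tau =
      Cexp (twoPiI * e' * CZ s / CZ l) *
      sumI n l (fun t => xi l (s * t) * chiT n l (n' + CZ (t * a)) (e' + CZ t) u v tau).
Proof.
  intros Hl Hn HA.
  rewrite chiT_a1.
  rewrite (sumZ_ext _ (fun k => Cexp (twoPiI * e' * CZ s / CZ l) * (HT a n' e' u v tau k * xi l (s * k))))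
    by (intro k; apply HT_shift; lia).
  rewrite sumZ_scal by (apply AS_mul_xi; [lia | apply HA]).
  rewrite (key2 _ n l s Hl (HA v)).
  rewrite (sumI_ext _ _ (fun t => xi l (s * t) * chiT n l (n' + CZ (t * a)) (e' + CZ t) u v tau)
     (fun t => preT e' u tau * (xi l (s * t) * sumZ (fun m => HT a n' e' u v tau (m * l + t)%Z)))).
  - rewrite sumI_pull. ring.
  - intro t. rewrite (chiT_nl a n l n' e' t u v tau Hl Hn (HA v)). ring.
Qed.

Lemma exp_le_mono (x y : R) : (x <= y)%R -> (exp x <= exp y)%R.
Proof. intro H. destruct (Rle_lt_or_eq_dec _ _ H). left; apply exp_increasing; auto. right; subst; auto. Qed.

Lemma exp_pow_neg n : ((exp (-1)) ^ n = exp (- INR n))%R.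
Proof.
  induction n.
  - simpl. rewrite Ropp_0, exp_0. reflexivity.
  - simpl pow. rewrite IHn, <- exp_plus, S_INR. f_equal. ring.
Qed.

Lemma INR_abs_nat k : INR (Z.abs_nat k) = Rabs (IZR k).
Proof. rewrite INR_IZR_INZ, Zabs2Nat.id_abs, abs_IZR. reflexivity. Qed.

Lemma AS_gauss f (C0 al be ga : R) K : (0 <= C0)%R -> (0 < al)%R ->
  (forall k, (K <= Z.abs k)%Z -> (Cmod (f k) <= C0 * exp (- al * IZR k * IZR k + be * IZR k + ga))%R) ->
  AS f.
Proof.
  intros HC Hal Hb.
  set (b := (Rabs be + 1)%R).
  exists (C0 * exp (ga + b * b / (4 * al)))%R, (exp (-1)), K.
  split; [apply Rmult_le_pos; [auto | left; apply exp_pos]|].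
  split; [split; [apply exp_pos|]|].
  { rewrite <- exp_0. apply exp_increasing. lra. }
  intros k Hk. eapply Rle_trans; [apply Hb, Hk|].
  rewrite (Rmult_assoc C0). apply Rmult_le_compat_l; auto.
  rewrite exp_pow_neg, <- exp_plus. apply exp_le_mono.
  rewrite INR_abs_nat.
  set (x := IZR k). set (y := Rabs x).
  assert (Hy : (0 <= y)%R) by apply Rabs_pos.
  assert (Hbx : (be * x <= Rabs be * y)%R).
  { unfold y. rewrite <- Rabs_mult. apply Rle_abs. }
  assert (Hxx : (x * x = y * y)%R).
  { unfold y. rewrite <- Rabs_mult. rewrite Rabs_pos_eq. auto. nra. }
  assert (Hq : (4 * al * (- al * y * y + b * y) <= b * b)%R).
  { pose proof (Rle_0_sqr (2 * al * y - b)) as Hs. unfold Rsqr in Hs. nra. }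
  assert (Hq' : (- al * y * y + b * y <= b * b / (4 * al))%R).
  { apply (Rmult_le_reg_l (4 * al)). lra. unfold Rdiv. replace (4 * al * (b * b * / (4 * al)))%R with (b * b)%R by (field; lra). exact Hq. }
  unfold b in *. nra.
Qed.

Definition ZT (a : Z) (n' e' u v tau : C) (x : R) : C :=
  twoPiI * v * (e' + RtoC x) + twoPiI * u * (n' + RtoC x * CZ a)
  + twoPiI * tau * (n' * e' + e' * e' / RtoC 2 + RtoC x * RtoC x / RtoC 2 * CZ (2 * a + 1)
                    + RtoC x * (CZ a * e' + n' + e')).

Lemma HT_ZT a n' e' u v tau k : HT a n' e' u v tau k = sgnZ (k * 1) * Cexp (ZT a n' e' u v tau (IZR k)).
Proof.
  unfold HT, ZT. rewrite <- !Cmult_assoc, <- !Cexp_add. f_equal. f_equal.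
  rewrite !Z.mul_1_r, !CZ_mul. rewrite CZ_add, CZ_mul. change (CZ 1) with (RtoC 1). change (CZ 2) with (RtoC 2).
  unfold CZ. field.
Qed.

Lemma ReZT a n' e' u v tau x :
  Re (ZT a n' e' u v tau x) =
  (- (PI * Im tau * IZR (2 * a + 1)) * x * x
   + (Re (ZT a n' e' u v tau 1) - Re (ZT a n' e' u v tau 0) + PI * Im tau * IZR (2 * a + 1)) * x
   + Re (ZT a n' e' u v tau 0))%R.
Proof.
  unfold ZT, twoPiI, CZ. rewrite !plus_IZR, !mult_IZR. unfold Re, Im. simpl. field.
Qed.

Lemma AS_HT a n' e' u v tau : (0 <= a)%Z -> (0 < Im tau)%R -> AS (HT a n' e' u v tau).
Proof.
  intros Ha Ht.
  apply (AS_gauss _ 1 (PI * Im tau * IZR (2 * a + 1))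
     (Re (ZT a n' e' u v tau 1) - Re (ZT a n' e' u v tau 0) + PI * Im tau * IZR (2 * a + 1))
     (Re (ZT a n' e' u v tau 0)) 0).
  - lra.
  - pose proof PI_RGT_0. assert (0 < IZR (2 * a + 1))%R by (apply IZR_lt; lia).
    apply Rmult_lt_0_compat; [apply Rmult_lt_0_compat|]; auto.
  - intros k _. rewrite HT_ZT, Cmod_mult, Cmod_sgnZ, Cmod_Cexp, ReZT. right. ring.
Qed.

Definition ZA (a : Z) (n' : R) (u v tau : C) (x : R) : C :=
  twoPiI * v * RtoC x + twoPiI * u * (CZ a * RtoC x + RtoC n' + RtoC (/2))
  + PiI * tau * RtoC x * (RtoC x * CZ (2 * a + 1) + RtoC (2 * n') + RtoC 1).

Lemma gA_ZA a n' u v tau k : gA a n' u v tau k =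
  sgnZ k * Cexp (ZA a n' u v tau (IZR k)) / (RtoC 1 - Cexp (twoPiI * (u + CZ k * tau))).
Proof.
  unfold gA, ZA. rewrite <- !Cmult_assoc, <- !Cexp_add. f_equal. f_equal. f_equal.
  rewrite CZ_mul. unfold CZ. ring.
Qed.

Lemma ReZA a n' u v tau x :
  Re (ZA a n' u v tau x) =
  (- (PI * Im tau * IZR (2 * a + 1)) * x * x
   + (Re (ZA a n' u v tau 1) - Re (ZA a n' u v tau 0) + PI * Im tau * IZR (2 * a + 1)) * x
   + Re (ZA a n' u v tau 0))%R.
Proof.
  unfold ZA, twoPiI, PiI, CZ. rewrite !plus_IZR, !mult_IZR. unfold Re, Im. simpl. field.
Qed.

Lemma den_bound u tau : (0 < Im tau)%R -> exists K, forall k, (K <= Z.abs k)%Z ->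
  (/ 2 <= Cmod (RtoC 1 - Cexp (twoPiI * (u + CZ k * tau))))%R.
Proof.
  intro Ht.
  exists (up ((Rabs (Im u) + 1) / Im tau)). intros k Hk.
  destruct (archimed ((Rabs (Im u) + 1) / Im tau)) as [Hup _].
  set (w := Cexp (twoPiI * (u + CZ k * tau))).
  assert (Hw : Cmod w = exp (- (2 * PI) * (Im u + IZR k * Im tau))).
  { unfold w. rewrite Cmod_Cexp. f_equal. unfold twoPiI, CZ, Re, Im. simpl. ring. }
  assert (Hk' : (Rabs (IZR k) * Im tau > Rabs (Im u) + 1)%R).
  { apply IZR_le in Hk. rewrite abs_IZR in Hk.
    assert (Rabs (IZR k) > (Rabs (Im u) + 1) / Im tau)%R by lra.
    apply (Rmult_gt_compat_r (Im tau)) in H; auto.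
    unfold Rdiv in H. rewrite Rmult_assoc, Rinv_l, Rmult_1_r in H; lra. }
  assert (T1 : (Cmod (RtoC 1) <= Cmod (RtoC 1 - w) + Cmod w)%R).
  { replace (RtoC 1) with ((RtoC 1 - w) + w) at 1 by ring. apply Cmod_triangle. }
  assert (T2 : (Cmod w <= Cmod (RtoC 1 - w) + 1)%R).
  { replace w with (- (RtoC 1 - w) + RtoC 1) at 1 by ring.
    eapply Rle_trans; [apply Cmod_triangle|]. rewrite Cmod_opp, Cmod_1. lra. }
  rewrite Cmod_1 in T1.
  pose proof PI2_1 as Hpi.
  assert (He : (2 < exp 1)%R) by (pose proof (exp_ineq1 1 ltac:(lra)); lra).
  pose proof (Rabs_pos (Im u)). pose proof (Rle_abs (Im u)). pose proof (Rle_abs (- Im u)).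
  rewrite Rabs_Ropp in H1.
  destruct (Rle_or_lt 0 (IZR k)) as [Hk0|Hk0].
  - rewrite Rabs_pos_eq in Hk' by auto.
    assert (Cmod w < / 2)%R.
    { rewrite Hw. apply (Rlt_trans _ (exp (-1))).
      apply exp_increasing. nra.
      assert (E : (exp (-1) * exp 1 = 1)%R) by (rewrite <- exp_plus; replace (-1 + 1)%R with 0%R by ring; apply exp_0).
      pose proof (exp_pos (-1)). nra. }
    lra.
  - rewrite Rabs_left in Hk' by auto.
    assert (2 < Cmod w)%R.
    { rewrite Hw. apply (Rlt_le_trans _ (exp 1)); auto.
      apply exp_le_mono. nra. }
    lra.
Qed.

Lemma AS_gA a n' u v tau : (0 <= a)%Z -> (0 < Im tau)%R -> AS (gA a n' u v tau).
Proof.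
  intros Ha Ht.
  destruct (den_bound u tau Ht) as [K HK].
  apply (AS_gauss _ 2 (PI * Im tau * IZR (2 * a + 1))
     (Re (ZA a n' u v tau 1) - Re (ZA a n' u v tau 0) + PI * Im tau * IZR (2 * a + 1))
     (Re (ZA a n' u v tau 0)) K).
  - lra.
  - pose proof PI_RGT_0. assert (0 < IZR (2 * a + 1))%R by (apply IZR_lt; lia).
    apply Rmult_lt_0_compat; [apply Rmult_lt_0_compat|]; auto.
  - intros k Hk. specialize (HK k Hk).
    rewrite gA_ZA, Cmod_div.
    2:{ intro H0. rewrite H0, Cmod_0 in HK. lra. }
    rewrite Cmod_mult, Cmod_sgnZ, Cmod_Cexp, <- ReZA, Rmult_1_l.
    pose proof (exp_pos (Re (ZA a n' u v tau (IZR k)))).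
    unfold Rdiv. apply (Rmult_le_reg_r (Cmod (RtoC 1 - Cexp (twoPiI * (u + CZ k * tau))))). lra.
    rewrite Rmult_assoc, Rinv_l by lra. nra.
Qed.


Theorem mainTheorem5 (l n : Z) (hl : (0 < l)%Z) (hdiv : (n mod l = 0)%Z)
  (hpos : (0 < n * l + l * l)%Z) (u v tau : C) (htau : (0 < Im tau)%R) :
  let a := (n / l)%Z in
  ((forall k : Z, Cexp (twoPiI * (u + CZ k * tau)) <> RtoC 1) ->
   (forall (n' : R) (t : Z),
      chiA n l n' t u v tau =
      RtoC (/ IZR l) * sumI n l (fun s =>
        xi l (- (t * s)) * chiA a 1 n' 0 u (v + CZ s / CZ l) tau)) /\
   (forall (n' : R) (t : Z),
      chiA a 1 n' 0 u (v + CZ t / CZ l) tau =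
      sumI n l (fun s => xi l (t * s) * chiA n l n' s u v tau))) /\
  (forall (n' e' : C) (t : Z),
      chiT n l (n' + CZ (t * a)) (e' + CZ t) u v tau =
      RtoC (/ IZR l) * sumI n l (fun s =>
        xi l (- (s * t)) * Cexp (- (twoPiI * e' * CZ s / CZ l))
        * chiT a 1 n' e' u (v + CZ s / CZ l) tau)) /\
  (forall (n' e' : C) (s : Z),
      chiT a 1 n' e' u (v + CZ s / CZ l) tau =
      Cexp (twoPiI * e' * CZ s / CZ l) *
      sumI n l (fun t => xi l (s * t) * chiT n l (n' + CZ (t * a)) (e' + CZ t) u v tau)).
Proof.
  intro a.
  assert (Hn : n = (a * l)%Z).
  { unfold a. rewrite Z.mul_comm. apply Z_div_exact_2; lia. }
  assert (Ha : (n / l)%Z = a) by reflexivity.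
  assert (Ha0 : (0 <= a)%Z) by (rewrite Hn in hpos; nia).
  clearbody a.
  split; [intros _; split | split].
  - intros n' t. apply (atyp1 a n l n' t u v tau hl Ha).
    intro w. apply AS_gA; auto.
  - intros n' t. apply (atyp2 a n l n' t u v tau hl Ha).
    intro w. apply AS_gA; auto.
  - intros n' e' t. apply (typ3 a n l n' e' t u v tau hl Hn).
    intro w. apply AS_HT; auto.
  - intros n' e' s. apply (typ4 a n l n' e' s u v tau hl Hn).
    intro w. apply AS_HT; auto.
Qed.
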